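(* Fix $t>0$. Let $P$ be a $t$-convex polygon in the Lorentz plane. Then $P$ is a proper convex subset of $\mathbb{R}^2$ contained in $\mathcal{F}$, bounded by a polygonal line with a countable number of sides, and globally invariant under the action of the group $\langle H_t\rangle$.
   Context: The Lorentz plane is $\mathbb{R}^2$ with the bilinear form $\langle x,y\rangle_1=x_1y_1-x_2y_2$. Let $\mathcal{F}=\{x\in\mathbb{R}^2 : \langle x,x\rangle_1<0,\ x_2>0\}$ (future time-like vectors) and $\mathbb{H}=\{x\in\mathbb{R}^2:\langle x,x\rangle_1=-1,\ x_2>0\}$. For $s\in\mathbb{R}$ let $H_s=\begin{pmatrix}\cosh s&\sinh s\\ \sinh s&\cosh s\end{pmatrix}$ (hyperbolic translation), and $\langle H_t\rangle$ the group generated by $H_t$. For $a\in\mathcal{F}$, $a^{\bot}=\{x\in\mathbb{R}^2:\langle x,a\rangle_1=\langle a,a\rangle_1\}$. A $t$-convex polygon is defined as follows: given $n\geq1$ pairwise distinct vectors $\eta_1,\dots,\eta_n\in\mathbb{H}$ and positive numbers $h_1,\dots,h_n$, it is the intersection, over all $k\in\mathbb{Z}$ and $i=1,\dots,n$, of the closed half-planes bounded by the lines $(H_t^k(h_i\eta_i))^{\bot}$, each half-plane chosen so that the vector $H_t^k\eta_i$ points into it (i.e. the half-plane $\{x:\langle x,H_t^k\eta_i\rangle_1\le -h_i\}$). *)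

(* Defs.v *)
From Stdlib Require Import Reals ZArith.
Open Scope R_scope.

Definition pt := (R * R)%type.

Definition lor (x y : pt) : R := fst x * fst y - snd x * snd y.

Definition future_timelike (x : pt) : Prop := lor x x < 0 /\ snd x > 0.

Definition in_H (x : pt) : Prop := lor x x = -1 /\ snd x > 0.

Definition Hs (s : R) (x : pt) : pt :=
  (cosh s * fst x + sinh s * snd x, sinh s * fst x + cosh s * snd x).

(* H_t^k for k : Z (H_{-t} is the inverse matrix of H_t) *)
Definition Hpow (t : R) (k : Z) (x : pt) : pt :=
  match k with
  | Z0 => x
  | Zpos p => Nat.iter (Pos.to_nat p) (Hs t) x
  | Zneg p => Nat.iter (Pos.to_nat p) (Hs (- t)) x
  end.

Definition scal (c : R) (x : pt) : pt := (c * fst x, c * snd x).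

Definition perp (a : pt) : pt -> Prop := fun x => lor x a = lor a a.

(* closed half-plane bounded by (H_t^k (h eta))^perp into which H_t^k eta points *)
Definition halfplane (t : R) (k : Z) (eta : pt) (h : R) : pt -> Prop :=
  fun x => lor x (Hpow t k eta) <= - h.

Definition tconvex_polygon (t : R) (n : nat) (eta : nat -> pt) (h : nat -> R)
  : pt -> Prop :=
  fun x => forall (k : Z) (i : nat), (i < n)%nat -> halfplane t k (eta i) (h i) x.

Definition convex_set (P : pt -> Prop) : Prop :=
  forall x y l, P x -> P y -> 0 <= l <= 1 ->
    P ((1 - l) * fst x + l * fst y, (1 - l) * snd x + l * snd y).

Definition dist2 (x y : pt) : R := sqrt ((fst x - fst y)^2 + (snd x - snd y)^2).

Definition boundary (P : pt -> Prop) (x : pt) : Prop :=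
  forall eps, eps > 0 ->
    (exists y, P y /\ dist2 x y < eps) /\ (exists z, ~ P z /\ dist2 x z < eps).

Definition segment (a b : pt) (z : pt) : Prop :=
  exists l, 0 <= l <= 1 /\ z = ((1 - l) * fst a + l * fst b, (1 - l) * snd a + l * snd b).

Definition bounded_by_countable_polygonal_line (P : pt -> Prop) : Prop :=
  exists v : Z -> pt,
    (forall j1 j2, v j1 = v j2 -> j1 = j2) /\
    (forall z, boundary P z <-> exists j : Z, segment (v j) (v (j + 1)%Z) z).

Definition invariant_Ht (t : R) (P : pt -> Prop) : Prop :=
  forall (k : Z) (y : pt), (exists x, P x /\ y = Hpow t k x) <-> P y.

(* Main.v *)
Require Import Defs.
From Stdlib Require Import Reals ZArith Lra Lia Psatz List Classical.
Open Scope R_scope.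

Definition pp (x : pt) : R := snd x + fst x.
Definition qq (x : pt) : R := snd x - fst x.

Lemma lor_pq x y : lor x y = - (pp x * qq y + qq x * pp y) / 2.
Proof. unfold lor, pp, qq. field. Qed.

Lemma pq_eq x y : pp x = pp y -> qq x = qq y -> x = y.
Proof.
  destruct x as [a b], y as [c d]; unfold pp, qq; simpl; intros.
  f_equal; lra.
Qed.

Lemma pp_Hs T x : pp (Hs T x) = exp T * pp x.
Proof. unfold pp, Hs, cosh, sinh; simpl. field. Qed.
Lemma qq_Hs T x : qq (Hs T x) = exp (- T) * qq x.
Proof. unfold qq, Hs, cosh, sinh; simpl. field. Qed.

Lemma pq_iter s n x : pp (Nat.iter n (Hs s) x) = exp (INR n * s) * pp x /\
                      qq (Nat.iter n (Hs s) x) = exp (- (INR n * s)) * qq x.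
Proof.
  induction n as [|n [IH1 IH2]].
  - simpl. rewrite Rmult_0_l, Ropp_0, exp_0. lra.
  - change (Nat.iter (S n) (Hs s) x) with (Hs s (Nat.iter n (Hs s) x)).
    rewrite pp_Hs, qq_Hs, IH1, IH2, S_INR.
    replace ((INR n + 1) * s) with (s + INR n * s) by ring.
    replace (- (s + INR n * s)) with (- s + - (INR n * s)) by ring.
    rewrite !exp_plus. split; ring.
Qed.

Lemma pq_Hpow t k x : pp (Hpow t k x) = exp (IZR k * t) * pp x /\
                      qq (Hpow t k x) = exp (- (IZR k * t)) * qq x.
Proof.
  destruct k as [|p|p]; simpl.
  - rewrite Rmult_0_l, Ropp_0, exp_0. lra.
  - destruct (pq_iter t (Pos.to_nat p) x) as [H1 H2]. rewrite H1, H2, INR_IPR. auto.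
  - destruct (pq_iter (-t) (Pos.to_nat p) x) as [H1 H2]. rewrite H1, H2, INR_IPR.
    replace (IPR p * - t) with (- IPR p * t) by ring. auto.
Qed.

Lemma exp_archi_big t M : t > 0 -> exists K : nat, forall k : Z, (IZR (Z.of_nat K) <= IZR k)%R -> M <= exp (IZR k * t).
Proof.
  intros Ht.
  destruct (archimed (M / t)) as [H1 _].
  exists (Z.to_nat (up (M/t))).
  intros k Hk.
  pose proof (exp_ineq1_le (IZR k * t)).
  assert (IZR (up (M/t)) <= IZR (Z.of_nat (Z.to_nat (up (M / t))))).
  { apply IZR_le. lia. }
  assert (M / t <= IZR k) by lra.
  assert (M <= IZR k * t).
  { apply (Rmult_le_compat_r t) in H2; [|lra]. unfold Rdiv in H2.
    rewrite Rmult_assoc, Rinv_l in H2; lra. }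
  lra.
Qed.


Definition ev (f : R * R) (p : R) : R := fst f - snd f * p.

Definition dominates (L : list (R*R)) (f : R*R) (a w : R) : Prop :=
  forall p, a <= p <= w -> forall g, In g L -> ev g p <= ev f p.

Inductive chain (L : list (R*R)) : R -> list (R * (R*R)) -> R -> Prop :=
| chain_nil : forall a, chain L a nil a
| chain_cons : forall a w f rest b, a < w -> In f L -> dominates L f a w ->
    chain L w rest b -> chain L a ((w, f) :: rest) b.

Lemma affine_nonneg (al be a x p : R) :
  a < x -> al - be * a >= 0 -> al - be * x >= 0 -> a <= p <= x -> al - be * p >= 0.
Proof.
  intros Hax Ha Hx Hp.
  assert (E : (x - a) * (al - be * p) = (x - p) * (al - be * a) + (p - a) * (al - be * x)) by ring.
  assert (0 <= (x - p) * (al - be * a) + (p - a) * (al - be * x)).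
  { apply Rplus_le_le_0_compat; apply Rmult_le_pos; lra. }
  rewrite <- E in H.
  destruct (Rle_or_lt 0 (al - be * p)) as [|Hn]; [lra|].
  assert ((x - a) * (al - be * p) < 0) by (apply Rmult_pos_neg; lra). lra.
Qed.

Lemma dom_step L f g a w :
  dominates L g a w ->
  (forall p, a <= p <= w -> ev f p >= ev g p) -> dominates (f :: L) f a w.
Proof.
  intros D Hfg p Hp k [<-|Hk]; [lra|]. specialize (D p Hp k Hk). specialize (Hfg p Hp). lra.
Qed.

Lemma dom_step2 L f g a w :
  dominates L g a w ->
  (forall p, a <= p <= w -> ev f p <= ev g p) -> dominates (f :: L) g a w.
Proof.
  intros D Hfg p Hp k [<-|Hk]; [apply Hfg; auto|]. apply D; auto.
Qed.

Lemma crossing (al be a w : R) :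
  a < w -> al - be * a >= 0 -> al - be * w <= 0 -> al - be * a > al - be * w ->
  exists x, a <= x <= w /\ al - be * x = 0.
Proof.
  intros Haw Ha Hw Hne.
  set (da := al - be * a) in *. set (dw := al - be * w) in *.
  exists (a + (w - a) * (da / (da - dw))).
  assert (H0 : 0 <= da / (da - dw)).
  { unfold Rdiv. apply Rmult_le_pos; [lra|]. left; apply Rinv_0_lt_compat; lra. }
  assert (H1 : da / (da - dw) <= 1).
  { apply (Rmult_le_reg_r (da - dw)); [lra|]. unfold Rdiv. rewrite Rmult_assoc, Rinv_l by lra. lra. }
  split; [split; nra|].
  unfold da, dw. field. fold da dw. lra.
Qed.

Lemma piece_refine L f g a w :
  a < w -> In g L -> dominates L g a w ->
  forall rest b, chain (f :: L) w rest b ->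
  exists segs, chain (f :: L) a (segs ++ rest) b.
Proof.
  intros Haw Hg D rest b C.
  set (al := fst f - fst g). set (be := snd f - snd g).
  assert (Hd : forall p, ev f p - ev g p = al - be * p) by (intros; unfold ev, al, be; ring).
  assert (Gall : (forall p, a <= p <= w -> al - be * p <= 0) -> exists segs, chain (f :: L) a (segs ++ rest) b).
  { intros Hle. exists ((w, g) :: nil). simpl. constructor; auto. right; auto.
    apply (dom_step2 L f g); auto. intros p Hp. specialize (Hle p Hp). specialize (Hd p). lra. }
  destruct (Rle_or_lt 0 (al - be * a)) as [Ha|Ha];
  destruct (Rle_or_lt 0 (al - be * w)) as [Hw|Hw].
  - exists ((w, f) :: nil). simpl. constructor; auto. left; auto.
    apply (dom_step L f g); auto. intros p Hp.
    pose proof (affine_nonneg al be a w p Haw ltac:(lra) ltac:(lra) Hp). rewrite <- Hd in H. lra.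
  - destruct (crossing al be a w Haw ltac:(lra) ltac:(lra) ltac:(lra)) as [x [Hx1 Hx0]].
    destruct (Rle_lt_or_eq_dec a x (proj1 Hx1)) as [Hax|Hax].
    + assert (Hxw : x < w) by (destruct (proj2 Hx1); auto; subst; lra).
      exists ((x, f) :: (w, g) :: nil). simpl. constructor; auto. left; auto.
      * apply (dom_step L f g); auto.
        -- intros p Hp. apply D; lra.
        -- intros p Hp. pose proof (affine_nonneg al be a x p Hax ltac:(lra) ltac:(lra) Hp).
           rewrite <- Hd in H. lra.
      * constructor; auto. right; auto.
        apply (dom_step2 L f g); auto.
        -- intros p Hp. apply D; lra.
        -- intros p Hp. pose proof (affine_nonneg (-al) (-be) x w p Hxw ltac:(lra) ltac:(lra) Hp).
           specialize (Hd p). lra.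
    + apply Gall. intros p Hp.
      pose proof (affine_nonneg (-al) (-be) a w p Haw ltac:(rewrite Hax; lra) ltac:(lra) Hp). lra.
  - destruct (crossing (-al) (-be) a w Haw ltac:(lra) ltac:(lra) ltac:(lra)) as [x [Hx1 Hx0]].
    destruct (Rle_lt_or_eq_dec x w (proj2 Hx1)) as [Hxw|Hxw].
    + assert (Hax : a < x) by (destruct (proj1 Hx1); auto; subst; lra).
      exists ((x, g) :: (w, f) :: nil). simpl. constructor; auto. right; auto.
      * apply (dom_step2 L f g); auto.
        -- intros p Hp. apply D; lra.
        -- intros p Hp. pose proof (affine_nonneg (-al) (-be) a x p Hax ltac:(lra) ltac:(lra) Hp).
           specialize (Hd p). lra.
      * constructor; auto. left; auto.
        apply (dom_step L f g); auto.
        -- intros p Hp. apply D; lra.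
        -- intros p Hp. pose proof (affine_nonneg al be x w p Hxw ltac:(lra) ltac:(lra) Hp).
           specialize (Hd p). lra.
    + apply Gall. intros p Hp.
      pose proof (affine_nonneg (-al) (-be) a w p Haw ltac:(lra) ltac:(rewrite <- Hxw; lra) Hp). lra.
  - apply Gall. intros p Hp.
    pose proof (affine_nonneg (-al) (-be) a w p Haw ltac:(lra) ltac:(lra) Hp). lra.
Qed.

Lemma chain_refine L f a segs b : chain L a segs b -> exists segs', chain (f :: L) a segs' b.
Proof.
  induction 1.
  - exists nil. constructor.
  - destruct IHchain as [segs' C].
    destruct (piece_refine L f f0 a w H H0 H1 segs' b C) as [s S]. eauto.
Qed.

Lemma chain_exists L a b : L <> nil -> a < b -> exists segs, chain L a segs b.
Proof.
  intros HL Hab. induction L as [|g L IH]; [congruence|].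
  destruct L as [|g' L'].
  - exists ((b, g) :: nil). constructor; auto. left; auto.
    intros p Hp k [<-|[]]. lra. constructor.
  - destruct (IH ltac:(discriminate)) as [s C]. eapply chain_refine; eauto.
Qed.

Lemma chain_fun L a segs b : chain L a segs b ->
  exists w psi, w 0%nat = a /\ w (length segs) = b /\
    (forall r, (r < length segs)%nat -> w r < w (S r) /\ In (psi r) L /\ dominates L (psi r) (w r) (w (S r))).
Proof.
  induction 1.
  - exists (fun _ => a), (fun _ => (0,0)). simpl. split; auto. split; auto. intros; lia.
  - destruct IHchain as [w' [psi' [H3 [H4 H5]]]].
    exists (fun r => match r with O => a | S r' => w' r' end),
           (fun r => match r with O => f | S r' => psi' r' end).
    simpl. split; auto. split; auto.
    intros [|r0] Hr; simpl.
    + rewrite H3. auto.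
    + apply H5. lia.
Qed.


Lemma div_le0 X Y : Y > 0 -> (X / Y <= 0 <-> X <= 0).
Proof.
  intros HY. assert (HI : / Y > 0) by (apply Rinv_0_lt_compat; auto).
  assert (Y * / Y = 1) by (field; lra). unfold Rdiv. split; intro; nra.
Qed.

Lemma abs_le_dist a b : Rabs a <= sqrt (a ^ 2 + b ^ 2).
Proof.
  rewrite <- sqrt_Rsqr_abs. apply sqrt_le_1_alt. unfold Rsqr. nra.
Qed.

Lemma dist_pq z y : Rabs (pp z - pp y) <= 2 * dist2 z y /\ Rabs (qq z - qq y) <= 2 * dist2 z y.
Proof.
  unfold dist2, pp, qq.
  pose proof (abs_le_dist (fst z - fst y) (snd z - snd y)).
  pose proof (abs_le_dist (snd z - snd y) (fst z - fst y)).
  replace ((snd z - snd y) ^ 2 + (fst z - fst y) ^ 2) with ((fst z - fst y) ^ 2 + (snd z - snd y) ^ 2) in H0 by ring.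
  split.
  - replace (snd z + fst z - (snd y + fst y)) with ((snd z - snd y) + (fst z - fst y)) by ring.
    pose proof (Rabs_triang (snd z - snd y) (fst z - fst y)). lra.
  - replace (snd z - fst z - (snd y - fst y)) with ((snd z - snd y) + - (fst z - fst y)) by ring.
    pose proof (Rabs_triang (snd z - snd y) (- (fst z - fst y))) as H2. rewrite Rabs_Ropp in H2. lra.
Qed.

Lemma sqrt_lt_eps x e : 0 <= x -> e > 0 -> x < e ^ 2 -> sqrt x < e.
Proof.
  intros Hx He H. rewrite <- (sqrt_pow2 e) by lra. apply sqrt_lt_1_alt. lra.
Qed.

Lemma mono_fun (w : nat -> R) N : (forall r, (r < N)%nat -> w r < w (S r)) ->
  forall r1 r2, (r1 <= r2 <= N)%nat -> w r1 <= w r2.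
Proof.
  intros Hm r1 r2 H. induction r2 as [|r2 IH].
  - assert (r1 = 0%nat) by lia. subst. lra.
  - destruct (Nat.eq_dec r1 (S r2)) as [->|Hne]; [lra|].
    specialize (IH ltac:(lia)). specialize (Hm r2 ltac:(lia)). lra.
Qed.

Lemma cover_fun (w : nat -> R) N : (1 <= N)%nat -> (forall r, (r < N)%nat -> w r < w (S r)) ->
  forall x, w 0%nat <= x <= w N -> exists r, (r < N)%nat /\ w r <= x <= w (S r).
Proof.
  intros HN Hm x Hx. revert HN Hm Hx. induction N as [|N IH]; intros HN Hm Hx; [lia|].
  destruct (Nat.eq_dec N 0) as [->|HN0].
  - exists 0%nat. split; auto.
  - destruct (Rle_or_lt x (w N)) as [Hle|Hlt].
    + destruct (IH ltac:(lia)) as [r [Hr Hr']].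
      * intros r Hr. apply Hm. lia.
      * lra.
      * exists r. split; auto; lia.
    + exists N. split; [lia|]. lra.
Qed.

Section Fam.
Variables (t : R) (n : nat) (eta : nat -> pt) (h : nat -> R).
Hypothesis Ht : t > 0.
Hypothesis Hn : (1 <= n)%nat.
Hypothesis HH : forall i, (i < n)%nat -> in_H (eta i).
Hypothesis Hh : forall i, (i < n)%nat -> h i > 0.

Definition Pv i := pp (eta i).
Definition uu i k := exp (- (IZR k * t)) / Pv i.
Definition line i k : R * R := (2 * h i * uu i k, uu i k ^ 2).
Definition lv i k p := ev (line i k) p.
Definition Cond p q := forall i k, (i < n)%nat -> lv i k p <= q.
Definition Gr p q := 0 < p /\ Cond p q /\
  forall e, e > 0 -> exists i k, (i < n)%nat /\ lv i k p > q - e.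

Lemma PQ_pos i : (i < n)%nat -> Pv i > 0 /\ qq (eta i) > 0 /\ Pv i * qq (eta i) = 1.
Proof.
  intros Hi. destruct (HH i Hi) as [H1 H2]. rewrite lor_pq in H1. unfold Pv.
  assert (pp (eta i) * qq (eta i) = 1) by lra.
  assert (pp (eta i) + qq (eta i) > 0) by (unfold pp, qq; lra).
  split; [|split]; auto; nra.
Qed.

Lemma uu_pos i k : (i < n)%nat -> uu i k > 0.
Proof.
  intros Hi. unfold uu. destruct (PQ_pos i Hi) as [H1 _].
  apply Rdiv_lt_0_compat; auto. apply exp_pos.
Qed.

Lemma lv_eq i k p : lv i k p = 2 * h i * uu i k - uu i k ^ 2 * p.
Proof. reflexivity. Qed.

Lemma half_iff i k x : (i < n)%nat ->
  (halfplane t k (eta i) (h i) x <-> lv i k (pp x) <= qq x).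
Proof.
  intros Hi. unfold halfplane. rewrite lor_pq.
  destruct (pq_Hpow t k (eta i)) as [E1 E2]. rewrite E1, E2.
  destruct (PQ_pos i Hi) as [HP [HQ HPQ]]. fold (Pv i).
  set (E := exp (IZR k * t)). assert (HE : E > 0) by apply exp_pos.
  rewrite exp_Ropp. fold E.
  rewrite lv_eq. unfold uu. rewrite exp_Ropp. fold E.
  set (Q := qq (eta i)) in *. set (P := Pv i) in *.
  assert (Hkey : 2 * h i * (/ E / P) - (/ E / P) ^ 2 * pp x - qq x
             = (2 * h i - (pp x * (/ E * Q) + qq x * (E * P))) / (E * P)).
  { replace Q with (/ P) by (field_simplify_eq; lra). field. split; lra. }
  assert (EP : E * P > 0) by nra.
  pose proof (div_le0 (2 * h i - (pp x * (/ E * Q) + qq x * (E * P))) (E * P) EP).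
  split; intro H0; lra.
Qed.

Lemma P_iff x : tconvex_polygon t n eta h x <-> Cond (pp x) (qq x).
Proof.
  unfold tconvex_polygon, Cond. split; intros H.
  - intros i k Hi. apply (half_iff i k x Hi). auto.
  - intros k i Hi. apply (half_iff i k x Hi). auto.
Qed.


Lemma bound_fin (f : nat -> R) (m : nat) : exists M, M > 0 /\ forall i, (i < m)%nat -> f i <= M.
Proof.
  induction m as [|m [M [HM IH]]].
  - exists 1. split; [lra|]. intros; lia.
  - exists (Rmax M (f m)). split. { pose proof (Rmax_l M (f m)). lra. }
    intros i Hi. destruct (Nat.eq_dec i m) as [->|Hne].
    + apply Rmax_r.
    + pose proof (IH i ltac:(lia)). pose proof (Rmax_l M (f i)). pose proof (Rmax_l M (f m)). lra.
Qed.

Lemma uu_big_unif M : exists K : nat, forall i k, (i < n)%nat -> IZR k <= - IZR (Z.of_nat K) -> uu i k >= M.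
Proof.
  destruct (bound_fin Pv n) as [Pm [HPm HP]].
  destruct (exp_archi_big t (Rabs M * Pm) Ht) as [K HK].
  exists K. intros i k Hi Hk.
  specialize (HK (- k)%Z). rewrite opp_IZR in HK. specialize (HK ltac:(lra)).
  destruct (PQ_pos i Hi) as [HPi _]. specialize (HP i Hi).
  unfold uu. replace (- (IZR k * t)) with (- IZR k * t) by ring.
  set (e := exp (- IZR k * t)) in *.
  assert (e / Pv i >= e / Pm).
  { unfold Rdiv. apply Rle_ge, Rmult_le_compat_l; [left; apply exp_pos|]. apply Rinv_le_contravar; lra. }
  assert (e / Pm >= Rabs M).
  { apply Rle_ge. apply (Rmult_le_reg_r Pm); auto. unfold Rdiv. rewrite Rmult_assoc, Rinv_l by lra. lra. }
  pose proof (Rle_abs M). lra.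
Qed.

Lemma uu_small_unif eps : eps > 0 -> exists K : nat, forall i k, (i < n)%nat -> IZR (Z.of_nat K) <= IZR k -> uu i k <= eps.
Proof.
  intros He.
  destruct (bound_fin (fun i => qq (eta i)) n) as [Qm [HQm HQ]].
  destruct (exp_archi_big t (Qm / eps) Ht) as [K HK].
  exists K. intros i k Hi Hk. specialize (HK k Hk).
  destruct (PQ_pos i Hi) as [HPi [HQi HPQ]]. specialize (HQ i Hi). simpl in HQ.
  unfold uu. rewrite exp_Ropp.
  set (e := exp (IZR k * t)) in *. assert (e > 0) by apply exp_pos.
  replace (/ e / Pv i) with (qq (eta i) / e) by (rewrite <- (Rmult_1_l (/ e / Pv i)), <- HPQ; field; split; lra).
  apply (Rmult_le_reg_r e); auto. unfold Rdiv. rewrite Rmult_assoc, Rinv_l by lra.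
  assert (Qm / eps * eps = Qm) by (field; lra).
  assert (Qm / eps * eps <= e * eps) by (apply Rmult_le_compat_r; lra).
  lra.
Qed.

Lemma uu_shift i k m : (i < n)%nat -> uu i (k + m) = uu i k / exp (IZR m * t).
Proof.
  intros Hi. unfold uu. rewrite plus_IZR.
  replace (- ((IZR k + IZR m) * t)) with (- (IZR k * t) + - (IZR m * t)) by ring.
  rewrite exp_plus, (exp_Ropp (IZR m * t)). destruct (PQ_pos i Hi).
  pose proof (exp_pos (IZR m * t)). field. split; lra.
Qed.

Lemma lv_scale i k m p : (i < n)%nat ->
  lv i (k + m) (exp (IZR m * t) * p) = lv i k p / exp (IZR m * t).
Proof.
  intros Hi. rewrite !lv_eq, uu_shift by auto. pose proof (exp_pos (IZR m * t)). field. lra.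
Qed.

Lemma Cond_scale p q m : Cond p q -> Cond (exp (IZR m * t) * p) (q / exp (IZR m * t)).
Proof.
  intros C i k Hi. pose proof (exp_pos (IZR m * t)).
  replace k with ((k - m) + m)%Z by ring. rewrite lv_scale by auto.
  specialize (C i (k - m)%Z Hi). unfold Rdiv. apply Rmult_le_compat_r; auto.
  left; apply Rinv_0_lt_compat; auto.
Qed.

Lemma Gr_scale p q m : Gr p q -> Gr (exp (IZR m * t) * p) (q / exp (IZR m * t)).
Proof.
  intros [H1 [H2 H3]]. pose proof (exp_pos (IZR m * t)) as HE.
  split; [apply Rmult_lt_0_compat; auto|]. split; [apply Cond_scale; auto|].
  intros e He. destruct (H3 (e * exp (IZR m * t)) ltac:(apply Rmult_lt_0_compat; auto)) as [i [k [Hi Hl]]].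
  exists i, (k + m)%Z. split; auto. rewrite lv_scale by auto.
  apply (Rmult_lt_reg_r (exp (IZR m * t))); auto.
  replace ((q / exp (IZR m * t) - e) * exp (IZR m * t)) with (q - e * exp (IZR m * t)) by (field; lra).
  replace (lv i k p / exp (IZR m * t) * exp (IZR m * t)) with (lv i k p) by (field; lra). lra.
Qed.

Lemma n0 : (0 < n)%nat. Proof. lia. Qed.

Lemma Cond_pos p q : Cond p q -> p > 0 /\ q > 0.
Proof.
  intros C. pose proof (Hh 0%nat n0) as H0.
  assert (Hp : p > 0).
  { destruct (Rle_or_lt p 0) as [Hp|Hp]; auto.
    destruct (uu_big_unif (Rabs q / (2 * h 0%nat) + 1)) as [K HK].
    specialize (HK 0%nat (- Z.of_nat K)%Z n0). rewrite opp_IZR in HK. specialize (HK ltac:(lra)).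
    specialize (C 0%nat (- Z.of_nat K)%Z n0). rewrite lv_eq in C.
    set (u := uu 0 (- Z.of_nat K)) in *.
    assert (u > 0) by (apply uu_pos; apply n0).
    assert (2 * h 0%nat * u > Rabs q).
    { assert (2 * h 0%nat * (Rabs q / (2 * h 0%nat) + 1) > Rabs q).
      { replace (2 * h 0%nat * (Rabs q / (2 * h 0%nat) + 1)) with (Rabs q + 2 * h 0%nat) by (field; lra). lra. }
      nra. }
    pose proof (Rle_abs q). nra. }
  split; auto.
  destruct (uu_small_unif (h 0%nat / p) ltac:(apply Rdiv_lt_0_compat; lra)) as [K HK].
  specialize (HK 0%nat (Z.of_nat K) n0 (Rle_refl _)).
  specialize (C 0%nat (Z.of_nat K) n0). rewrite lv_eq in C.
  set (u := uu 0 (Z.of_nat K)) in *. assert (u > 0) by (apply uu_pos; apply n0).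
  assert (u * p <= h 0%nat).
  { apply (Rmult_le_compat_r p) in HK; [|lra]. replace (h 0%nat / p * p) with (h 0%nat) in HK by (field; lra). lra. }
  nra.
Qed.


Lemma out_open z : (exists i k, (i < n)%nat /\ lv i k (pp z) > qq z) ->
  exists d, d > 0 /\ forall y, dist2 z y < d -> ~ Cond (pp y) (qq y).
Proof.
  intros [i [k [Hi Hg]]].
  set (g := lv i k (pp z) - qq z). set (u := uu i k).
  assert (Hu2 : u ^ 2 >= 0) by (apply Rle_ge, pow2_ge_0).
  exists (g / (4 * (u ^ 2 + 1))). split.
  { apply Rdiv_lt_0_compat; unfold g; lra. }
  intros y Hd C. specialize (C i k Hi).
  destruct (dist_pq z y) as [D1 D2].
  rewrite !lv_eq in *. fold u in Hg, C.
  pose proof (Rle_abs (pp y - pp z)). pose proof (Rle_abs (qq y - qq z)).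
  rewrite Rabs_minus_sym in H, H0.
  set (d := dist2 z y) in *.
  assert (Hd' : d * (4 * (u ^ 2 + 1)) < g).
  { apply (Rmult_lt_compat_r (4 * (u ^ 2 + 1))) in Hd; [|lra].
    replace (g / (4 * (u ^ 2 + 1)) * (4 * (u ^ 2 + 1))) with g in Hd by (field; lra). lra. }
  assert (u ^ 2 * (pp y - pp z) <= u ^ 2 * (2 * d)) by (apply Rmult_le_compat_l; lra).
  unfold g in Hd'. rewrite lv_eq in Hd'. fold u in Hd'. lra.
Qed.

Lemma in_open z : Cond (pp z) (qq z) ->
  (exists e, e > 0 /\ forall i k, (i < n)%nat -> lv i k (pp z) <= qq z - e) ->
  exists d, d > 0 /\ forall y, dist2 z y < d -> Cond (pp y) (qq y).
Proof.
  intros C [e [He Hle]].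
  destruct (Cond_pos _ _ C) as [Hp0 Hq0].
  destruct (bound_fin h n) as [Hm [HHm HHb]].
  set (p0 := pp z) in *. set (q0 := qq z) in *.
  set (w := 4 * Hm / p0). set (Cc := w ^ 2).
  assert (HCc : Cc >= 0) by (apply Rle_ge, pow2_ge_0).
  set (d := Rmin (p0 / 4) (Rmin (q0 / 4) (e / (2 + 2 * Cc)))).
  assert (Hd1 : d <= p0 / 4) by apply Rmin_l.
  assert (Hd2 : d <= q0 / 4) by (eapply Rle_trans; [apply Rmin_r| apply Rmin_l]).
  assert (Hd3 : d <= e / (2 + 2 * Cc)) by (eapply Rle_trans; [apply Rmin_r| apply Rmin_r]).
  assert (Hd3' : d * (2 + 2 * Cc) <= e).
  { apply (Rmult_le_compat_r (2 + 2 * Cc)) in Hd3; [|lra].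
    replace (e / (2 + 2 * Cc) * (2 + 2 * Cc)) with e in Hd3 by (field; lra). lra. }
  assert (Hdp : d > 0).
  { unfold d. apply Rmin_pos; [lra|]. apply Rmin_pos; [lra|]. apply Rdiv_lt_0_compat; lra. }
  exists d. split; auto.
  intros y Hy i k Hi.
  destruct (dist_pq z y) as [D1 D2]. fold p0 q0 in D1, D2.
  pose proof (Rle_abs (p0 - pp y)). pose proof (Rle_abs (pp y - p0)). rewrite Rabs_minus_sym in H0.
  pose proof (Rle_abs (q0 - qq y)).
  set (dd := dist2 z y) in *.
  assert (Hp : pp y >= p0 / 2) by lra.
  assert (Hq : qq y >= q0 - 2 * d) by lra.
  specialize (Hle i k Hi). rewrite lv_eq in *.
  pose proof (uu_pos i k Hi) as Hu. set (u := uu i k) in *.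
  specialize (HHb i Hi). pose proof (Hh i Hi).
  destruct (Rle_or_lt (2 * h i) (u * (p0 / 2))) as [Hbig|Hsmall].
  - assert (u * pp y >= 2 * h i) by nra. nra.
  - assert (Hw : u < w).
    { unfold w. apply (Rmult_lt_reg_r (p0 / 2)); [lra|].
      replace (4 * Hm / p0 * (p0 / 2)) with (2 * Hm) by (field; lra). lra. }
    assert (Hu2 : u ^ 2 <= Cc) by (unfold Cc; simpl; nra).
    assert (u ^ 2 * (p0 - pp y) <= u ^ 2 * Rabs (p0 - pp y)) by (apply Rmult_le_compat_l; [apply pow2_ge_0|apply Rle_abs]).
    assert (u ^ 2 * Rabs (p0 - pp y) <= Cc * (2 * d)).
    { apply Rmult_le_compat. all: try apply pow2_ge_0; try apply Rabs_pos; lra. }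
    lra.
Qed.

Lemma notCond_ex p q : ~ Cond p q -> exists i k, (i < n)%nat /\ lv i k p > q.
Proof.
  intros HC. apply NNPP. intro HN. apply HC. intros i k Hi.
  destruct (Rle_or_lt (lv i k p) q); auto. exfalso; apply HN; eauto.
Qed.

Lemma boundary_iff z : boundary (tconvex_polygon t n eta h) z <-> Gr (pp z) (qq z).
Proof.
  split.
  - intros B.
    assert (C : Cond (pp z) (qq z)).
    { apply NNPP. intro HC. destruct (out_open z (notCond_ex _ _ HC)) as [d [Hd Hout]].
      destruct (B d Hd) as [[y [Py Dy]] _]. apply (Hout y Dy). apply P_iff; auto. }
    split; [apply (Cond_pos _ _ C)|]. split; auto.
    intros e He. apply NNPP. intro HN.
    assert (Hall : forall i k, (i < n)%nat -> lv i k (pp z) <= qq z - e).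
    { intros i k Hi. destruct (Rle_or_lt (lv i k (pp z)) (qq z - e)); auto. exfalso; apply HN; eauto. }
    destruct (in_open z C (ex_intro _ e (conj He Hall))) as [d [Hd Hin]].
    destruct (B d Hd) as [_ [y [NPy Dy]]]. apply NPy. apply P_iff. auto.
  - intros [Hp [C Hs]] e He. split.
    + exists z. split; [apply P_iff; auto|].
      unfold dist2. replace ((fst z - fst z) ^ 2 + (snd z - snd z) ^ 2) with 0 by ring.
      rewrite sqrt_0. lra.
    + set (d := e / 2).
      exists (fst z + d / 2, snd z - d / 2). split.
      * intro HP. apply P_iff in HP. destruct (Hs d ltac:(unfold d; lra)) as [i [k [Hi Hl]]].
        specialize (HP i k Hi). unfold pp, qq in *. simpl in HP. replace (snd z - d / 2 + (fst z + d / 2)) with (snd z + fst z) in HP by ring. lra.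
      * unfold dist2. cbn [fst snd]. replace ((fst z - (fst z + d / 2)) ^ 2 + (snd z - (snd z - d / 2)) ^ 2) with (e ^ 2 / 8) by (unfold d; field).
        assert (e ^ 2 > 0) by (apply pow_lt; lra).
        apply sqrt_lt_eps.
        lra. lra. lra.
Qed.

Lemma relevance : exists (K : nat) (k0 : Z), (- Z.of_nat K <= k0 <= Z.of_nat K)%Z /\
  forall p, 1 <= p <= exp t -> forall i k, (i < n)%nat ->
    (- Z.of_nat K <= k <= Z.of_nat K)%Z \/ lv i k p <= lv 0 k0 p.
Proof.
  set (b := exp t). assert (Hb : b > 0) by apply exp_pos.
  assert (n0 : (0 < n)%nat) by lia. pose proof (Hh 0%nat n0) as Hh0.
  destruct (uu_small_unif (h 0%nat / b) ltac:(apply Rdiv_lt_0_compat; lra)) as [K0 HK0].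
  set (k0 := Z.of_nat K0).
  set (u0 := uu 0 k0).
  assert (Hu0 : u0 > 0) by (apply uu_pos; auto).
  assert (Hu0b : u0 * b <= h 0%nat).
  { specialize (HK0 0%nat k0 n0 (Rle_refl _)). fold u0 in HK0.
    apply (Rmult_le_compat_r b) in HK0; [|lra]. replace (h 0%nat / b * b) with (h 0%nat) in HK0 by (field; lra). lra. }
  set (dl := u0 * h 0%nat). assert (Hdl : dl > 0) by (unfold dl; nra).
  assert (Hl0 : forall p, 1 <= p <= b -> lv 0 k0 p >= dl).
  { intros p Hp. rewrite lv_eq. fold u0. unfold dl.
    assert (u0 * p <= u0 * b) by (apply Rmult_le_compat_l; lra). nra. }
  destruct (bound_fin h n) as [Hm [HHm HHb]].
  destruct (uu_small_unif (dl / (2 * Hm)) ltac:(apply Rdiv_lt_0_compat; lra)) as [K1 HK1].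
  destruct (uu_big_unif (2 * Hm)) as [K2 HK2].
  exists (Nat.max K0 (Nat.max K1 K2)), k0. split; [unfold k0; lia|].
  intros p Hp i k Hi.
  destruct (Z_le_gt_dec (- Z.of_nat (Nat.max K0 (Nat.max K1 K2))) k) as [Hk1|Hk1];
  [destruct (Z_le_gt_dec k (Z.of_nat (Nat.max K0 (Nat.max K1 K2)))) as [Hk2|Hk2]|].
  - left; lia.
  - right. specialize (HK1 i k Hi ltac:(apply IZR_le; lia)).
    specialize (Hl0 p Hp). rewrite lv_eq. pose proof (uu_pos i k Hi).
    specialize (HHb i Hi). pose proof (Hh i Hi).
    set (u := uu i k) in *.
    assert (2 * Hm * u <= dl).
    { apply (Rmult_le_compat_l (2 * Hm)) in HK1; [|lra].
      replace (2 * Hm * (dl / (2 * Hm))) with dl in HK1 by (field; lra). lra. }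
    assert (u ^ 2 * p >= 0) by (apply Rle_ge, Rmult_le_pos; [apply pow2_ge_0|lra]).
    nra.
  - right. assert (IZR k <= - IZR (Z.of_nat K2)).
    { rewrite <- opp_IZR. apply IZR_le. lia. }
    specialize (HK2 i k Hi H).
    specialize (Hl0 p Hp). rewrite lv_eq. pose proof (uu_pos i k Hi).
    specialize (HHb i Hi). pose proof (Hh i Hi).
    set (u := uu i k) in *.
    assert (u * p >= u) by nra.
    assert (u * (2 * h i - u * p) <= 0) by nra.
    replace (2 * h i * u - u ^ 2 * p) with (u * (2 * h i - u * p)) by ring. lra.
Qed.


Definition zr (K : nat) : list Z := map (fun j => (Z.of_nat j - Z.of_nat K)%Z) (seq 0 (2 * K + 1)).
Definition Lst (K : nat) : list (R * R) := flat_map (fun i => map (fun k => line i k) (zr K)) (seq 0 n).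

Lemma In_Lst K i k : (i < n)%nat -> (- Z.of_nat K <= k <= Z.of_nat K)%Z -> In (line i k) (Lst K).
Proof.
  intros Hi Hk. unfold Lst. apply in_flat_map. exists i. split; [apply in_seq; lia|].
  apply in_map. unfold zr. apply in_map_iff. exists (Z.to_nat (k + Z.of_nat K)). split.
  - rewrite Z2Nat.id by lia. lia.
  - apply in_seq. lia.
Qed.

Lemma Lst_In K f : In f (Lst K) -> exists i k, (i < n)%nat /\ f = line i k.
Proof.
  unfold Lst. intros Hf. apply in_flat_map in Hf. destruct Hf as [i [Hi Hf]].
  apply in_map_iff in Hf. destruct Hf as [k [Hk _]]. apply in_seq in Hi.
  exists i, k. split; [lia|auto].
Qed.

Lemma pieces : exists N (w : nat -> R) (psi : nat -> R * R), (1 <= N)%nat /\ w 0%nat = 1 /\ w N = exp t /\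
  forall r, (r < N)%nat -> w r < w (S r) /\
    forall p, w r <= p <= w (S r) -> Gr p (ev (psi r) p).
Proof.
  destruct relevance as [K [k0 [Hk0 Hrel]]].
  assert (n0 : (0 < n)%nat) by lia.
  assert (Hb : 1 < exp t) by (rewrite <- exp_0; apply exp_increasing; lra).
  assert (HL : Lst K <> nil).
  { intro E. pose proof (In_Lst K 0 0 n0 ltac:(lia)). rewrite E in H. inversion H. }
  destruct (chain_exists (Lst K) 1 (exp t) HL Hb) as [segs Ch].
  destruct (chain_fun _ _ _ _ Ch) as [w [psi [Hw0 [HwN Hw]]]].
  set (N := length segs) in *.
  assert (HN : (1 <= N)%nat).
  { destruct N as [|N']; [|lia]. rewrite Hw0 in HwN. lra. }
  exists N, w, psi. split; auto. split; auto. split; auto.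
  assert (Hmono : forall r1 r2, (r1 <= r2 <= N)%nat -> w r1 <= w r2).
  { apply mono_fun. intros r Hr. apply (Hw r Hr). }
  intros r Hr. destruct (Hw r Hr) as [Hlt [Hin Hdom]]. split; auto.
  intros p Hp.
  assert (Hp1 : 1 <= p <= exp t).
  { pose proof (Hmono 0%nat r ltac:(lia)). pose proof (Hmono (S r) N ltac:(lia)). lra. }
  destruct (Lst_In K (psi r) Hin) as [i' [k' [Hi' Epsi]]].
  split; [lra|]. split.
  - intros i k Hi. destruct (Hrel p Hp1 i k Hi) as [Hk|Hle].
    + apply (Hdom p Hp). apply In_Lst; auto.
    + eapply Rle_trans; [apply Hle|]. apply (Hdom p Hp). apply In_Lst; auto.
  - intros e He. exists i', k'. split; auto. unfold lv. rewrite <- Epsi. lra.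
Qed.


Lemma zpieces : exists (pv : Z -> R) (phi : Z -> R * R),
  (forall j, pv j < pv (j + 1)%Z) /\
  (forall j p, pv j <= p <= pv (j + 1)%Z -> Gr p (ev (phi j) p)) /\
  (forall p, p > 0 -> exists j, pv j <= p <= pv (j + 1)%Z).
Proof.
  destruct pieces as [N [w [psi [HN [Hw0 [HwN Hw]]]]]].
  set (NZ := Z.of_nat N). assert (HNZ : (0 < NZ)%Z) by (unfold NZ; lia).
  set (E := fun j => exp (IZR (j / NZ) * t)).
  set (rr := fun j => Z.to_nat (j mod NZ)).
  set (pv := fun j => E j * w (rr j)).
  assert (Hr : forall j, (rr j < N)%nat).
  { intro j. unfold rr. pose proof (Z.mod_pos_bound j NZ HNZ). unfold NZ in *. lia. }
  assert (Hnxt : forall j, pv (j + 1)%Z = E j * w (S (rr j))).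
  { intro j. unfold pv, E, rr.
    pose proof (Z.mod_pos_bound j NZ HNZ) as Hb. pose proof (Z.div_mod j NZ ltac:(lia)) as Hd.
    destruct (Z.eq_dec (j mod NZ + 1) NZ) as [Heq|Hne].
    - assert (Q : ((j + 1) / NZ = j / NZ + 1)%Z).
      { symmetry. apply (Z.div_unique_pos _ _ _ 0%Z); lia. }
      assert (Rm : ((j + 1) mod NZ = 0)%Z).
      { symmetry. apply (Z.mod_unique_pos _ _ (j / NZ + 1)%Z 0%Z); lia. }
      rewrite Q, Rm. simpl. rewrite Hw0.
      replace (S (Z.to_nat (j mod NZ))) with N by (unfold NZ in *; lia). rewrite HwN.
      rewrite plus_IZR, Rmult_plus_distr_r, Rmult_1_l, exp_plus. ring.
    - assert (Q : ((j + 1) / NZ = j / NZ)%Z).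
      { symmetry. apply (Z.div_unique_pos _ _ _ (j mod NZ + 1)%Z); lia. }
      assert (Rm : ((j + 1) mod NZ = j mod NZ + 1)%Z).
      { symmetry. apply (Z.mod_unique_pos _ _ (j / NZ)%Z); lia. }
      rewrite Q, Rm. f_equal. f_equal. lia. }
  exists pv, (fun j => (fst (psi (rr j)) / E j, snd (psi (rr j)) / E j ^ 2)).
  split; [|split].
  - intro j. rewrite Hnxt. unfold pv. apply Rmult_lt_compat_l; [apply exp_pos|]. apply Hw, Hr.
  - intros j p Hp. rewrite Hnxt in Hp. unfold pv in Hp.
    assert (HE : E j > 0) by apply exp_pos.
    assert (Hp' : w (rr j) <= p / E j <= w (S (rr j))).
    { split; apply (Rmult_le_reg_l (E j)); auto; replace (E j * (p / E j)) with p by (field; lra); lra. }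
    destruct (Hw (rr j) (Hr j)) as [_ HG].
    pose proof (Gr_scale _ _ (j / NZ)%Z (HG _ Hp')) as G.
    fold (E j) in G. replace (E j * (p / E j)) with p in G by (field; lra).
    unfold ev in *. cbn [fst snd]. replace (fst (psi (rr j)) / E j - snd (psi (rr j)) / E j ^ 2 * p)
      with ((fst (psi (rr j)) - snd (psi (rr j)) * (p / E j)) / E j) by (field; lra). auto.
  - intros p Hp.
    set (y := ln p / t). set (m := (up y - 1)%Z).
    destruct (archimed y) as [A1 A2].
    assert (Hm1 : IZR m <= y) by (unfold m; rewrite minus_IZR; lra).
    assert (Hm2 : y < IZR m + 1) by (unfold m; rewrite minus_IZR; lra).
    assert (Hy : ln p = y * t) by (unfold y; field; lra).
    set (Em := exp (IZR m * t)). assert (HEm : Em > 0) by apply exp_pos.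
    assert (Hl : Em <= p).
    { unfold Em. rewrite <- (exp_ln p) by lra. rewrite Hy.
      destruct (Rle_lt_or_eq_dec (IZR m * t) (y * t)) as [H1|H1].
      - apply Rmult_le_compat_r; lra.
      - left; apply exp_increasing; auto.
      - rewrite H1; lra. }
    assert (Hu : p < Em * exp t).
    { unfold Em. rewrite <- exp_plus. rewrite <- (exp_ln p) by lra. apply exp_increasing. rewrite Hy.
      nra. }
    assert (Hx : w 0%nat <= p / Em <= w N).
    { rewrite Hw0, HwN. split.
      - apply (Rmult_le_reg_l Em); auto. replace (Em * (p / Em)) with p by (field; lra). lra.
      - apply (Rmult_le_reg_l Em); auto. replace (Em * (p / Em)) with p by (field; lra). lra. }
    destruct (cover_fun w N HN (fun r Hr => proj1 (Hw r Hr)) _ Hx) as [r [HrN Hrw]].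
    set (j := (NZ * m + Z.of_nat r)%Z).
    assert (Q : (j / NZ = m)%Z) by (symmetry; apply (Z.div_unique_pos _ _ _ (Z.of_nat r)); unfold NZ in *; lia).
    assert (Rm : (j mod NZ = Z.of_nat r)%Z) by (symmetry; apply (Z.mod_unique_pos _ _ m); unfold NZ in *; lia).
    exists j. rewrite Hnxt. unfold pv, E, rr. rewrite Q, Rm, Nat2Z.id. fold Em.
    split; apply (Rmult_le_reg_r (/ Em)); try (apply Rinv_0_lt_compat; lra);
      replace (Em * w r * / Em) with (w r) by (field; lra);
      try replace (Em * w (S r) * / Em) with (w (S r)) by (field; lra);
      unfold Rdiv in Hrw; lra.
Qed.

End Fam.

Definition XY (p q : R) : pt := ((p - q) / 2, (p + q) / 2).
Lemma pp_XY p q : pp (XY p q) = p. Proof. unfold pp, XY; simpl; field. Qed.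
Lemma qq_XY p q : qq (XY p q) = q. Proof. unfold qq, XY; simpl; field. Qed.

Lemma strict_Z (f : Z -> R) : (forall j, f j < f (j + 1)%Z) -> forall j1 j2, (j1 < j2)%Z -> f j1 < f j2.
Proof.
  intros Hf j1 j2 Hj.
  replace j2 with (j1 + Z.of_nat (S (Z.to_nat (j2 - j1 - 1))))%Z by lia.
  induction (Z.to_nat (j2 - j1 - 1)) as [|m IH].
  - replace (j1 + Z.of_nat 1)%Z with (j1 + 1)%Z by lia. auto.
  - replace (j1 + Z.of_nat (S (S m)))%Z with ((j1 + Z.of_nat (S m)) + 1)%Z by lia.
    specialize (Hf (j1 + Z.of_nat (S m))%Z). lra.
Qed.

Lemma poly_lemma (B : pt -> Prop) (G : R -> R -> Prop) (pv : Z -> R) (phi : Z -> R * R) :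
  (forall z, boundary B z <-> G (pp z) (qq z)) ->
  (forall p q q', G p q -> G p q' -> q = q') ->
  (forall j, pv j < pv (j + 1)%Z) ->
  (forall j p, pv j <= p <= pv (j + 1)%Z -> G p (ev (phi j) p)) ->
  (forall p q, G p q -> exists j, pv j <= p <= pv (j + 1)%Z) ->
  bounded_by_countable_polygonal_line B.
Proof.
  intros HB Hu Hs Hpc Hcov.
  exists (fun j => XY (pv j) (ev (phi j) (pv j))). split.
  - intros j1 j2 E. assert (E' : pv j1 = pv j2) by (rewrite <- (pp_XY (pv j1) (ev (phi j1) (pv j1))), E; apply pp_XY).
    destruct (Z.lt_trichotomy j1 j2) as [L|[L|L]]; auto.
    + pose proof (strict_Z pv Hs j1 j2 L). lra.
    + pose proof (strict_Z pv Hs j2 j1 L). lra.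
  - intros z. rewrite HB. split.
    + intros Gz. destruct (Hcov _ _ Gz) as [j Hj]. exists j.
      pose proof (Hs j) as Hsj.
      assert (Eq : qq z = ev (phi j) (pp z)) by (apply (Hu (pp z)); auto).
      assert (Eq2 : ev (phi (j + 1)%Z) (pv (j + 1)%Z) = ev (phi j) (pv (j + 1)%Z)).
      { pose proof (Hs (j + 1)%Z). apply (Hu (pv (j + 1)%Z)); [apply Hpc; lra| apply Hpc; lra]. }
      rewrite Eq2.
      set (l := (pp z - pv j) / (pv (j + 1)%Z - pv j)).
      exists l. split.
      * unfold l. split.
        -- apply Rmult_le_pos; [lra|]. left; apply Rinv_0_lt_compat; lra.
        -- apply (Rmult_le_reg_r (pv (j + 1)%Z - pv j)); [lra|]. unfold Rdiv.
           rewrite Rmult_assoc, Rinv_l by lra. lra.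
      * apply pq_eq.
        -- unfold l. unfold pp, XY. cbn [fst snd]. field. lra.
        -- rewrite Eq. unfold l. unfold qq, pp, XY, ev. cbn [fst snd]. field. lra.
    + intros [j [l [Hl Ez]]].
      assert (Hp : pp z = (1 - l) * pv j + l * pv (j + 1)%Z).
      { rewrite Ez. unfold pp, XY; simpl. field. }
      pose proof (Hs j).
      assert (Hpj : pv j <= pp z <= pv (j + 1)%Z) by (rewrite Hp; split; nra).
      assert (Eq2 : ev (phi (j + 1)%Z) (pv (j + 1)%Z) = ev (phi j) (pv (j + 1)%Z)).
      { pose proof (Hs (j + 1)%Z). apply (Hu (pv (j + 1)%Z)); [apply Hpc; lra| apply Hpc; lra]. }
      assert (Hq : qq z = ev (phi j) (pp z)).
      { rewrite Hp. rewrite Ez. rewrite Eq2. unfold qq, XY, ev. cbn [fst snd]. field. }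
      rewrite Hq. apply Hpc. auto.
Qed.


Lemma P_Hpow t n eta h (HH : forall i, (i < n)%nat -> in_H (eta i)) k x :
  tconvex_polygon t n eta h x -> tconvex_polygon t n eta h (Hpow t k x).
Proof.
  intros Px. apply P_iff; auto. apply P_iff in Px; auto.
  destruct (pq_Hpow t k x) as [E1 E2]. rewrite E1, E2.
  rewrite exp_Ropp. replace (/ exp (IZR k * t) * qq x) with (qq x / exp (IZR k * t)) by (unfold Rdiv; ring).
  apply Cond_scale; auto.
Qed.

Theorem lemma3p3 (t : R) (n : nat) (eta : nat -> pt) (h : nat -> R) :
  t > 0 ->
  (1 <= n)%nat ->
  (forall i j, (i < n)%nat -> (j < n)%nat -> i <> j -> eta i <> eta j) ->
  (forall i, (i < n)%nat -> in_H (eta i)) ->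
  (forall i, (i < n)%nat -> h i > 0) ->
  let P := tconvex_polygon t n eta h in
  convex_set P /\
  (exists x, ~ P x) /\
  (forall x, P x -> future_timelike x) /\
  bounded_by_countable_polygonal_line P /\
  invariant_Ht t P.
Proof.
  intros Ht Hn Hd HH Hh P.
  split; [|split; [|split; [|split]]].
  - intros x y l Px Py Hl k i Hi. specialize (Px k i Hi). specialize (Py k i Hi).
    unfold halfplane in *.
    set (v := Hpow t k (eta i)) in *.
    assert (E : lor ((1 - l) * fst x + l * fst y, (1 - l) * snd x + l * snd y) v
               = (1 - l) * lor x v + l * lor y v) by (unfold lor; simpl; ring).
    rewrite E. nra.
  - exists (0, 0). intro HP. apply P_iff in HP; auto.
    destruct (Cond_pos t n eta h Ht Hn HH Hh _ _ HP) as [H1 _]. unfold pp in H1. simpl in H1. lra.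
  - intros x Px. apply P_iff in Px; auto.
    destruct (Cond_pos t n eta h Ht Hn HH Hh _ _ Px) as [H1 H2].
    unfold future_timelike. rewrite lor_pq. unfold pp, qq in *. split; nra.
  - destruct (zpieces t n eta h Ht Hn HH Hh) as [pv [phi [Hs [Hpc Hcov]]]].
    apply (poly_lemma P (Gr t n eta h) pv phi).
    + intro z. apply boundary_iff; auto.
    + intros p q q' [_ [C1 S1]] [_ [C2 S2]].
      destruct (Rtotal_order q q') as [L|[L|L]]; auto; exfalso.
      * destruct (S2 (q' - q) ltac:(lra)) as [i [k [Hi Hl]]]. specialize (C1 i k Hi). lra.
      * destruct (S1 (q - q') ltac:(lra)) as [i [k [Hi Hl]]]. specialize (C2 i k Hi). lra.
    + auto.
    + auto.
    + intros p q [Hp _]. apply Hcov; auto.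
  - intros k y. split.
    + intros [x [Px ->]]. apply P_Hpow; auto.
    + intros Py. exists (Hpow t (- k) y). split; [apply P_Hpow; auto|].
      destruct (pq_Hpow t k (Hpow t (- k) y)) as [E1 E2].
      destruct (pq_Hpow t (- k) y) as [F1 F2].
      apply pq_eq.
      * rewrite E1, F1, opp_IZR, <- Rmult_assoc, <- exp_plus.
        replace (IZR k * t + - IZR k * t) with 0 by ring. rewrite exp_0. ring.
      * rewrite E2, F2, opp_IZR, <- Rmult_assoc, <- exp_plus.
        replace (- (IZR k * t) + - (- IZR k * t)) with 0 by ring. rewrite exp_0. ring.
Qed.
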